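(* Let $P\subseteq\mathbb{R}^n$ be an $n$-dimensional lattice polytope with $\mathrm{cd}(P)>\lceil\frac{n+1}{2}\rceil$. Then through every vertex of $P$ there is an edge of $P$ whose only lattice points are its two vertices.
   Context: The codegree of $P$ is $\mathrm{cd}(P):=\min\{k\in\mathbb{Z}_{\ge1}:\mathrm{int}(kP)\cap\mathbb{Z}^n\neq\emptyset\}$. *)

(* Defs.v *)
From mathcomp Require Import all_boot all_order all_algebra.
From mathcomp Require Import reals.
Set Implicit Arguments.
Unset Strict Implicit.
Unset Printing Implicit Defensive.
Import Order.TTheory GRing.Theory Num.Theory.
Local Open Scope ring_scope.

Section PolytopeDefs.
Variables (R : realType) (n : nat).

Definition integral (x : 'rV[R]_n) : Prop := forall i, x ord0 i \is a Num.int.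

Definition dotp (a x : 'rV[R]_n) : R := \sum_i a ord0 i * x ord0 i.

Definition conv (V : seq 'rV[R]_n) (x : 'rV[R]_n) : Prop :=
  exists l : 'I_(size V) -> R,
    [/\ forall i, 0 <= l i, \sum_i l i = 1 & x = \sum_i l i *: V`_i].

(* P has (affine) dimension n: it contains n+1 affinely independent points
   x0, x0 + d_1, ..., x0 + d_n (the differences form a rank-n matrix). *)
Definition full_dim (P : 'rV[R]_n -> Prop) : Prop :=
  exists (x0 : 'rV[R]_n) (X : 'M[R]_n),
    [/\ P x0, forall i, P (row i X) & row_free (\matrix_(i < n) (row i X - x0))].

Definition dilate (k : nat) (P : 'rV[R]_n -> Prop) (y : 'rV[R]_n) : Prop :=
  exists x, P x /\ y = k%:R *: x.

(* topological interior in R^n (w.r.t. the sup-norm, i.e. the usual topology) *)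
Definition interior_pt (A : 'rV[R]_n -> Prop) (x : 'rV[R]_n) : Prop :=
  exists e : R, 0 < e /\
    forall y : 'rV[R]_n, (forall i, `|y ord0 i - x ord0 i| < e) -> A y.

Definition int_lattice_pt (P : 'rV[R]_n -> Prop) (k : nat) : Prop :=
  exists z, integral z /\ interior_pt (dilate k P) z.

Definition is_codegree (P : 'rV[R]_n -> Prop) (c : nat) : Prop :=
  [/\ (0 < c)%N, int_lattice_pt P c &
      forall k, (0 < k)%N -> (k < c)%N -> ~ int_lattice_pt P k].

Definition is_face (P F : 'rV[R]_n -> Prop) : Prop :=
  exists (a : 'rV[R]_n) (b : R),
    (forall x, P x -> dotp a x <= b) /\ (forall x, F x <-> (P x /\ dotp a x = b)).

Definition is_vertex (P : 'rV[R]_n -> Prop) (v : 'rV[R]_n) : Prop :=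
  is_face P (fun x => x = v).

Definition segment (v w x : 'rV[R]_n) : Prop :=
  exists t : R, 0 <= t <= 1 /\ x = (1 - t) *: v + t *: w.

Definition is_edge (P : 'rV[R]_n -> Prop) (v w : 'rV[R]_n) : Prop :=
  v != w /\ is_face P (segment v w).

End PolytopeDefs.

(* Main.v *)
Require Import Defs.
From mathcomp Require Import all_boot all_order all_algebra.
From mathcomp Require Import reals.
From Stdlib Require Import Classical.
From mathcomp Require Import ring lra zify.
Set Implicit Arguments.
Unset Strict Implicit.
Unset Printing Implicit Defensive.
Import Order.TTheory GRing.Theory Num.Theory.
Local Open Scope ring_scope.

Section Dot.
Variables (R : realType) (N : nat).
Implicit Types (x y z : 'rV[R]_N).

Lemma dotpDr y x1 x2 : dotp y (x1 + x2) = dotp y x1 + dotp y x2.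
Proof. by rewrite /dotp -big_split; apply: eq_bigr => i _; rewrite mxE mulrDr. Qed.
Lemma dotpDl y1 y2 x : dotp (y1 + y2) x = dotp y1 x + dotp y2 x.
Proof. by rewrite /dotp -big_split; apply: eq_bigr => i _; rewrite mxE mulrDl. Qed.
Lemma dotpZr y a x : dotp y (a *: x) = a * dotp y x.
Proof. by rewrite /dotp mulr_sumr; apply: eq_bigr => i _; rewrite mxE mulrCA. Qed.
Lemma dotpZl y a x : dotp (a *: y) x = a * dotp y x.
Proof. by rewrite /dotp mulr_sumr; apply: eq_bigr => i _; rewrite mxE mulrA. Qed.
Lemma dotp0r y : dotp y 0 = 0.
Proof. by rewrite /dotp big1 // => i _; rewrite mxE mulr0. Qed.
Lemma dotp0l x : dotp 0 x = 0.
Proof. by rewrite /dotp big1 // => i _; rewrite mxE mul0r. Qed.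
Lemma dotpNr y x : dotp y (- x) = - dotp y x.
Proof. by rewrite -scaleN1r dotpZr mulN1r. Qed.
Lemma dotpNl y x : dotp (- y) x = - dotp y x.
Proof. by rewrite -scaleN1r dotpZl mulN1r. Qed.
Lemma dotpBr y x1 x2 : dotp y (x1 - x2) = dotp y x1 - dotp y x2.
Proof. by rewrite dotpDr dotpNr. Qed.
Lemma dotpBl y1 y2 x : dotp (y1 - y2) x = dotp y1 x - dotp y2 x.
Proof. by rewrite dotpDl dotpNl. Qed.
Lemma dotp_sumr y (I : Type) (r : seq I) (P : pred I) (F : I -> 'rV[R]_N) :
  dotp y (\sum_(i <- r | P i) F i) = \sum_(i <- r | P i) dotp y (F i).
Proof. exact: (big_morph (dotp y) (dotpDr y) (dotp0r y)). Qed.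
Lemma dotp_self_gt0 x : x != 0 -> 0 < dotp x x.
Proof.
move=> nx; have [i xi] : exists i, x ord0 i != 0.
  apply/existsP; apply: contraR nx; rewrite negb_exists => /forallP H.
  by apply/eqP/rowP => j; rewrite mxE; apply/eqP; move: (H j); rewrite negbK.
rewrite /dotp (bigD1 i) //=.
have h1 : 0 < x ord0 i * x ord0 i by rewrite lt_def mulf_neq0 // -expr2 sqr_ge0.
apply: (lt_le_trans h1); rewrite lerDl; apply: sumr_ge0 => j _; by rewrite -expr2 sqr_ge0.
Qed.
End Dot.
Section Conv.
Variables (R : realType) (N : nat).
Implicit Types (x y z : 'rV[R]_N) (L : seq 'rV[R]_N).

Lemma conv_family (I : finType) L (f : I -> 'rV[R]_N) (w : I -> R) :
  (forall i, 0 <= w i) -> \sum_i w i = 1 -> (forall i, conv L (f i)) ->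
  conv L (\sum_i w i *: f i).
Proof.
move=> w0 w1 /fin_all_exists [lf Hlf].
exists (fun k => \sum_i w i * lf i k); split.
- by move=> k; apply: sumr_ge0 => i _; apply: mulr_ge0 => //; case: (Hlf i).
- rewrite exchange_big /= -[RHS]w1; apply: eq_bigr => i _.
  by rewrite -mulr_sumr; case: (Hlf i) => _ -> _; rewrite mulr1.
- rewrite (eq_bigr (fun i => \sum_k (w i * lf i k) *: L`_k)); last first.
    move=> i _; case: (Hlf i) => _ _ ->; rewrite scaler_sumr.
    by apply: eq_bigr => k _; rewrite scalerA.
  by rewrite exchange_big /=; apply: eq_bigr => k _; rewrite scaler_suml.
Qed.

Lemma conv_in L y : y \in L -> conv L y.
Proof.
move=> yL; have hi : (index y L < size L)%N by rewrite index_mem.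
pose i0 : 'I_(size L) := Ordinal hi.
exists (fun i => (i == i0)%:R); split.
- by move=> i; rewrite ler0n.
- by rewrite (bigD1 i0) //= eqxx big1 ?addr0 // => i /negPf ->.
- rewrite (bigD1 i0) //= eqxx big1 ?addr0.
    by rewrite scale1r nth_index.
  by move=> i /negPf ->; rewrite scale0r.
Qed.

Lemma conv_trans L1 L2 x : (forall y, y \in L2 -> conv L1 y) -> conv L2 x -> conv L1 x.
Proof.
move=> H [l [l0 l1 ->]]; apply: conv_family => // i.
by apply: H; apply: mem_nth.
Qed.

Lemma conv_subset L1 L2 x : {subset L1 <= L2} -> conv L1 x -> conv L2 x.
Proof. by move=> sL; apply: conv_trans => y /sL; apply: conv_in. Qed.

Lemma dotp_conv c L x : conv L x ->
  exists l : 'I_(size L) -> R, [/\ forall i, 0 <= l i, \sum_i l i = 1, x = \sum_i l i *: L`_i &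
     dotp c x = \sum_i l i * dotp c L`_i].
Proof.
move=> [l [l0 l1 ex]]; exists l; split => //.
by rewrite ex dotp_sumr; apply: eq_bigr => i _; rewrite dotpZr.
Qed.
End Conv.
Section Farkas.
Variables (R : realType) (N : nat).
Implicit Types (x y z b : 'rV[R]_N) (A : seq 'rV[R]_N).

Definition cone A b := exists l : nat -> R, (forall i, 0 <= l i) /\
  b = \sum_(0 <= i < size A) l i *: A`_i.

Lemma cone_cons A a b t : cone A b -> 0 <= t -> cone (a :: A) (t *: a + b).
Proof.
move=> [l [l0 eb]] t0; exists (fun i => if i is i'.+1 then l i' else t); split.
  by case.
by rewrite big_nat_recl // eb.
Qed.

Lemma farkas_m m : forall A b, size A = m -> cone A b \/
  exists y, (forall x, x \in A -> 0 <= dotp y x) /\ dotp y b < 0.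
Proof.
elim: m => [|m IH] A b.
  case: A => // _; have [->|nb] := eqVneq b 0.
    by left; exists (fun _ => 0); split => //; rewrite big_geq.
  by right; exists (- b); split => //; rewrite dotpNl oppr_lt0 dotp_self_gt0.
case: A => // a A [sA].
have [[l [l0 eb]]|[y [yA yb]]] := IH A b sA.
  by left; rewrite -[b]add0r -(scale0r a); apply: cone_cons => //; exists l.
have [ya|ya] := leP 0 (dotp y a).
  by right; exists y; split => // x; rewrite in_cons => /orP [/eqP ->|/yA].
pose f x := x - (dotp y x / dotp y a) *: a.
have yan : dotp y a != 0 by rewrite lt_eqF.
have := IH (map f A) (f b); rewrite size_map => /(_ sA) [[l [l0 eb]]|[y' [yA' yb']]].
  pose b'' := \sum_(0 <= i < size A) l i *: A`_i.
  have fb'' : f b = f b''.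
    rewrite eb size_map /f /b'' dotp_sumr mulr_suml scaler_suml -sumrB.
    apply: eq_big_nat => i /andP [_ hi]; rewrite (nth_map 0) //.
    by rewrite scalerBr dotpZr scalerA mulrA.
  have yb'' : 0 <= dotp y b''.
    rewrite dotp_sumr; apply: sumr_ge0 => i _; rewrite dotpZr.
    have [hi|hi] := ltnP i (size A); first by rewrite mulr_ge0 // yA // mem_nth.
    by rewrite nth_default // dotp0r mulr0.
  have t0 : 0 <= (dotp y b - dotp y b'') / dotp y a.
    rewrite mulr_le0 // ?invr_le0 ?(ltW ya) //.
    by rewrite subr_le0 (le_trans (ltW yb)).
  have -> : b = (dotp y b - dotp y b'') / dotp y a *: a + b''.
    have fb2 : b - (dotp y b / dotp y a) *: a = b'' - (dotp y b'' / dotp y a) *: a := fb''.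
    rewrite mulrBl scalerBl -{1}(subrK ((dotp y b / dotp y a) *: a) b) fb2.
    by rewrite [RHS]addrC addrA addrAC.
  by left; apply: cone_cons => //; exists l.
right; exists (y' - (dotp y' a / dotp y a) *: y).
have key x : dotp (y' - (dotp y' a / dotp y a) *: y) x = dotp y' (f x).
  rewrite dotpBl dotpZl /f dotpBr dotpZr; ring.
split; last by rewrite key.
move=> x; rewrite in_cons key => /orP [/eqP ->|xA].
  by rewrite /f divff // scale1r subrr dotp0r.
by apply: yA'; apply: map_f.
Qed.

Lemma farkas A b : cone A b \/
  exists y, (forall x, x \in A -> 0 <= dotp y x) /\ dotp y b < 0.
Proof. exact: (@farkas_m (size A)). Qed.
End Farkas.
Section Sep.
Variables (R : realType) (N : nat).
Implicit Types (x y z p : 'rV[R]_N) (L : seq 'rV[R]_N).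

Definition hom x : 'rV[R]_(N + 1) := row_mx x (const_mx 1).

Lemma dotp_row_mx (y1 x1 : 'rV[R]_N) (y2 x2 : 'rV[R]_1) :
  dotp (row_mx y1 y2) (row_mx x1 x2) = dotp y1 x1 + dotp y2 x2.
Proof.
rewrite /dotp big_split_ord /=; congr (_ + _); apply: eq_bigr => i _.
  by rewrite !row_mxEl.
by rewrite !row_mxEr.
Qed.

Lemma dotp_hom (y : 'rV[R]_(N + 1)) x : dotp y (hom x) = dotp (lsubmx y) x + rsubmx y 0 0.
Proof.
rewrite -{1}(hsubmxK y) /hom dotp_row_mx; congr (_ + _).
by rewrite /dotp big_ord1 !mxE mulr1.
Qed.

Lemma sum_row_mx (I : Type) (r : seq I) (P : pred I) (F : I -> 'rV[R]_N) (G : I -> 'rV[R]_1) :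
  \sum_(i <- r | P i) row_mx (F i) (G i) = row_mx (\sum_(i <- r | P i) F i) (\sum_(i <- r | P i) G i).
Proof.
apply: (big_rec3 (fun a b c => a = row_mx b c)); first by rewrite row_mx0.
by move=> i a b c _ ->; rewrite add_row_mx.
Qed.

Lemma sep L p : ~ conv L p -> exists c, forall q, q \in L -> dotp c q < dotp c p.
Proof.
move=> npL.
have [[l [l0 el]]|[y [yA yb]]] := farkas (map hom L) (hom p).
  exfalso; apply: npL.
  have : hom p = row_mx (\sum_(0 <= i < size L) l i *: L`_i)
                        (\sum_(0 <= i < size L) l i *: (const_mx 1 : 'rV[R]_1)).
    rewrite el size_map -sum_row_mx; apply: eq_big_nat => i /andP [_ hi].
    by rewrite (nth_map 0) // /hom scale_row_mx.
  move/eq_row_mx => [ep e1].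
  exists (fun i : 'I_(size L) => l i); split => //.
    move/matrixP: e1 => /(_ 0 0); rewrite mxE => ->.
    rewrite summxE big_mkord; apply: eq_bigr => i _; by rewrite !mxE mulr1.
  by rewrite ep big_mkord.
exists (- lsubmx y) => q qL.
have := yA _ (map_f hom qL); have := yb; rewrite !dotp_hom !dotpNl.
move=> h1 h2; lra.
Qed.
End Sep.
Section MinGen.
Variables (R : realType) (N : nat).
Implicit Types (x y z p : 'rV[R]_N) (L Q E : seq 'rV[R]_N).

Lemma size_filter_lt E e : e \in E -> (size (filter (predC1 e) E) < size E)%N.
Proof.
move=> eE; rewrite size_filter -(count_predC (pred1 e) E) addnC -ltn_subLR ?subnn //.
  by rewrite -has_count has_pred1.
Qed.

Lemma min_gen_aux m Q E : (size E <= m)%N -> {subset E <= Q} ->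
  (forall q, q \in Q -> conv E q) ->
  exists E', [/\ {subset E' <= Q}, (forall q, q \in Q -> conv E' q) &
    (forall e, e \in E' -> ~ conv (filter (predC1 e) E') e)].
Proof.
elim: m E => [|m IH] E hs sub gen.
  exists E; split => // e eE; move: hs; rewrite leqn0 => /nilP E0; by rewrite E0 in eE.
case: (classic (exists e, e \in E /\ conv (filter (predC1 e) E) e)); last first.
  move=> H; exists E; split => // e eE ce; apply: H; by exists e.
move=> [e [eE ce]]; apply: (IH (filter (predC1 e) E)).
- by rewrite -ltnS (leq_trans (size_filter_lt eE)).
- by move=> x; rewrite mem_filter => /andP [_ /sub].
- move=> q /gen; apply: conv_trans => y yE.
  have [->|ne] := eqVneq y e; first exact: ce.
  by apply: conv_in; rewrite mem_filter /= ne.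
Qed.

Lemma min_gen Q : exists E, [/\ {subset E <= Q}, (forall q, q \in Q -> conv E q) &
    (forall e, e \in E -> ~ conv (filter (predC1 e) E) e)].
Proof. by apply: (@min_gen_aux (size Q) Q Q) => // q; apply: conv_in. Qed.
End MinGen.
Lemma seq_argmin (R : realType) (T : eqType) (s : seq T) (F : T -> R) :
  s != [::] -> exists x, x \in s /\ forall y, y \in s -> F x <= F y.
Proof.
elim: s => // a [|b s] IH _.
  by exists a; split => [|y]; rewrite ?mem_seq1 // => /eqP ->.
have [x [xs xm]] := IH isT.
have [le|lt] := leP (F a) (F x).
  exists a; split; first by rewrite mem_head.
  move=> y; rewrite in_cons => /orP [/eqP ->//|/xm]; exact: le_trans.
exists x; split; first by rewrite in_cons xs orbT.
move=> y; rewrite in_cons => /orP [/eqP ->|/xm//]; exact: ltW.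
Qed.

Section Conv2.
Variables (R : realType) (N : nat).
Implicit Types (x y z p v w : 'rV[R]_N) (L : seq 'rV[R]_N).

Lemma conv2 L y1 y2 t : conv L y1 -> conv L y2 -> 0 <= t <= 1 ->
  conv L ((1 - t) *: y1 + t *: y2).
Proof.
move=> c1 c2 /andP [t0 t1].
have := @conv_family R N bool L (fun b => if b then y1 else y2) (fun b => if b then 1 - t else t).
rewrite !big_bool /=; apply => //.
- by case => //; rewrite subr_ge0.
- by rewrite subrK.
- by case.
Qed.

Lemma conv_seg L v w x : conv L v -> conv L w -> segment v w x -> conv L x.
Proof. by move=> cv cw [t [ht ->]]; apply: conv2. Qed.

Lemma conv_minus L x v : conv L x ->
  exists l : 'I_(size L) -> R, [/\ forall i, 0 <= l i, \sum_i l i = 1 &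
     x - v = \sum_i l i *: (L`_i - v)].
Proof.
move=> [l [l0 l1 ex]]; exists l; split => //.
rewrite ex [RHS](eq_bigr (fun i => l i *: L`_i - l i *: v)); last by move=> i _; rewrite scalerBr.
by rewrite sumrB -scaler_suml l1 scale1r.
Qed.
End Conv2.
Section Edge.
Variables (R : realType) (n : nat) (V : seq 'rV[R]_n) (v a : 'rV[R]_n).
Hypothesis vV : v \in V.
Hypothesis av : forall u, u \in V -> u != v -> dotp a u < dotp a v.

Definition U := [seq u <- V | u != v].
Definition sf u := dotp a v - dotp a u.
Definition g u := v + (sf u)^-1 *: (u - v).
Definition Q := map g U.

Lemma memU u : (u \in U) = (u \in V) && (u != v).
Proof. by rewrite mem_filter andbC. Qed.

Lemma sf_gt0 u : u \in U -> 0 < sf u.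
Proof. by rewrite memU => /andP [uV nv]; rewrite /sf subr_gt0 av. Qed.

Lemma ug u : u \in U -> u - v = sf u *: (g u - v).
Proof.
move=> uU; rewrite /g (addrC v) addrK scalerA divff ?scale1r //.
by rewrite gt_eqF // sf_gt0.
Qed.

Lemma ag u : u \in U -> dotp a (g u) = dotp a v - 1.
Proof.
move=> uU; have := sf_gt0 uU; rewrite /g dotpDr dotpZr dotpBr => h.
have -> : dotp a u - dotp a v = - sf u by rewrite /sf opprB.
by rewrite mulrN mulVf ?gt_eqF.
Qed.

Lemma edge_of (e c' : 'rV[R]_n) : e \in Q ->
  (forall q, q \in Q -> q != e -> dotp c' q < dotp c' e) ->
  exists w, [/\ w \in V, w != v, (exists s0, 0 < s0 /\ w - v = s0 *: (e - v)) &
             is_face (conv V) (segment v w)].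
Proof.
move=> eQ sepc.
have [u0 u0U eu0] := mapP eQ.
pose W := [seq u <- U | g u == e].
have Wn : W != [::].
  apply/eqP => W0; have : u0 \in W by rewrite mem_filter u0U -eu0 eqxx.
  by rewrite W0.
have [w [wW wm]] := seq_argmin (fun u => dotp a u) Wn.
move: (wW); rewrite mem_filter => /andP [/eqP gw wU].
pose mu := dotp c' e - dotp c' v; pose c := c' + mu *: a.
have cU u : u \in U -> dotp c u - dotp c v = sf u * (dotp c' (g u) - dotp c' e).
  move=> uU; rewrite -dotpBr (ug uU) dotpZr; congr (_ * _).
  by rewrite /c dotpBr !dotpDl !dotpZl (ag uU) /mu; ring.
have gle u : u \in U -> dotp c' (g u) <= dotp c' e.
  move=> uU; have [->//|ne] := eqVneq (g u) e.
  by apply: ltW; apply: sepc => //; apply: map_f.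
have cV u : u \in V -> dotp c u <= dotp c v.
  move=> uV; have [->//|ne] := eqVneq u v.
  have uU : u \in U by rewrite memU uV.
  rewrite -subr_le0 (cU _ uU) mulr_ge0_le0 ?subr_le0 ?gle //.
  exact: ltW (sf_gt0 uU).
have cVeq u : u \in V -> u != v -> dotp c u = dotp c v -> g u = e.
  move=> uV unv eq; have uU : u \in U by rewrite memU uV.
  apply/eqP; apply: contraT => ne.
  have : dotp c u - dotp c v < 0.
    rewrite (cU _ uU) pmulr_rlt0 ?sf_gt0 // subr_lt0; apply: sepc => //.
    exact: map_f.
  by rewrite eq subrr ltxx.
have swp := sf_gt0 wU.
have ew : w - v = sf w *: (e - v) by rewrite (ug wU) gw.
have cw : dotp c w = dotp c v.
  by apply/eqP; rewrite -subr_eq0 (cU _ wU) gw subrr mulr0.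
move: (wU); rewrite memU => /andP [wV wnv].
exists w; split => //; first by exists (sf w).
exists c, (dotp c v); split.
  move=> x /(dotp_conv c) [l [l0 l1 _ ->]].
  rewrite -[X in _ <= X]mul1r -l1 mulr_suml; apply: ler_sum => i _.
  by apply: ler_wpM2l => //; apply: cV; apply: mem_nth.
move=> x; split.
  move=> sx; split; first by apply: (conv_seg (conv_in vV) (conv_in wV)).
  case: sx => t [_ ->]; rewrite dotpDr !dotpZr cw; ring.
move=> [cx ex].
have [l [l0 l1 exv]] := conv_minus v cx.
have z i : l i * (dotp c v - dotp c V`_i) = 0.
  apply: (@psumr_eq0P _ _ predT (fun i => l i * (dotp c v - dotp c V`_i))) => //.
    by move=> j _; rewrite mulr_ge0 // subr_ge0 cV // mem_nth.
  have := congr1 (dotp c) exv; rewrite dotpBr ex subrr dotp_sumr => /esym H.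
  have -> : \sum_(i | predT i) l i * (dotp c v - dotp c V`_i) =
     - \sum_j dotp c (l j *: (V`_j - v)) by rewrite -sumrN; apply: eq_bigr => j _; rewrite dotpZr dotpBr -mulrN opprB.
  by rewrite H oppr0.
pose r (i : 'I_(size V)) := if (V`_i != v) && (g V`_i == e) then sf V`_i / sf w else 0.
have key i : l i *: (V`_i - v) = (l i * r i) *: (w - v).
  have [l0i|lnz] := eqVneq (l i) 0; first by rewrite l0i mul0r !scale0r.
  have cVi : dotp c V`_i = dotp c v.
    by apply/eqP; rewrite eq_sym -subr_eq0; move/eqP: (z i); rewrite mulf_eq0 (negPf lnz).
  have ViV : V`_i \in V by apply: mem_nth.
  rewrite /r; have [Vv|Vnv] := eqVneq V`_i v; first by rewrite Vv subrr scaler0 /= mulr0 scale0r.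
  have gi := cVeq _ ViV Vnv cVi.
  have ViU : V`_i \in U by rewrite memU ViV.
  rewrite gi eqxx /= (ug ViU) gi ew !scalerA; congr (_ *: _).
  by field; rewrite gt_eqF.
have r01 i : 0 <= r i <= 1.
  rewrite /r; case: ifP => [/andP [Vnv /eqP gi]|_]; last by rewrite lexx ler01.
  have ViU : V`_i \in U by rewrite memU Vnv andbT mem_nth.
  rewrite divr_ge0 ?(ltW (sf_gt0 ViU)) ?(ltW swp) //= (ler_pdivrMr _ _ swp) mul1r /sf lerB // wm //.
  by rewrite mem_filter gi eqxx.
exists (\sum_i l i * r i); split.
  apply/andP; split; first by apply: sumr_ge0 => i _; rewrite mulr_ge0 //; case/andP: (r01 i).
  rewrite -l1; apply: ler_sum => i _; apply: ler_piMr => //; by case/andP: (r01 i).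
have : x - v = (\sum_i l i * r i) *: (w - v).
  by rewrite exv scaler_suml; apply: eq_bigr => i _; rewrite key.
move/eqP; rewrite subr_eq => /eqP ->.
by rewrite scalerBr scalerBl scale1r addrC addrA addrAC.
Qed.
End Edge.
Section Interior.
Variables (R : realType) (n : nat) (V : seq 'rV[R]_n).

Lemma int_pt (v : 'rV[R]_n) (D : 'M[R]_n) (k : nat) :
  conv V v -> integral v -> D \in unitmx -> (forall i, integral (row i D)) ->
  (forall i, conv V (v + 2%:R *: row i D)) -> (0 < k)%N -> (n < 2 * k)%N ->
  int_lattice_pt (conv V) k.
Proof.
move=> cv iv uD iD cD k0 nk.
pose z := k%:R *: v + \sum_i row i D.
exists z; split.
  move=> j; rewrite /z !mxE summxE; apply: rpredD.
    by apply: rpredM; [exact: natr_int | exact: iv].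
  apply: rpred_sum => i _; have := iD i j; by rewrite mxE.
pose Mi := invmx D.
pose S2 := \sum_j \sum_i `|Mi i j|.
have S2ge : 0 <= S2 by apply: sumr_ge0 => j _; apply: sumr_ge0 => i _.
pose e := (1 + S2)^-1.
have M0 : 0 < 1 + S2 by rewrite ltr_pwDl.
have e0 : 0 < e by rewrite invr_gt0.
exists e; split => // y yz.
pose dl := y - z; pose t := dl *m Mi.
have dlt : dl = t *m D by rewrite /t mulmxKV.
have tj j : `|t 0 j| <= e * \sum_i `|Mi i j|.
  rewrite /t mxE mulr_sumr; apply: (le_trans (ler_norm_sum _ _ _)); apply: ler_sum => i _.
  rewrite normrM; apply: ler_wpM2r => //.
  by apply: ltW; have := yz i; rewrite /dl !mxE.
have St : \sum_j `|t 0 j| < 1.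
  apply: (le_lt_trans (ler_sum _ (fun j _ => tj j))).
  rewrite -mulr_sumr /e -/S2 mulrC (ltr_pdivrMr _ _ M0) mul1r; lra.
have tj1 j : `|t 0 j| < 1.
  apply: le_lt_trans St; rewrite (bigD1 j) //= lerDl; exact: sumr_ge0.
have k0R : (k%:R : R) != 0 by rewrite pnatr_eq0 -lt0n.
pose u j := (1 + t 0 j) / (2 * k)%:R.
have k2 : (0 : R) < (2 * k)%:R by rewrite ltr0n muln_gt0.
have u0 j : 0 <= u j.
  apply: divr_ge0; last exact: ltW.
  have := tj1 j; rewrite ltr_norml => /andP [h _]; lra.
have Su : \sum_j u j <= 1.
  rewrite /u -mulr_suml big_split /= sumr_const card_ord ler_pdivrMr // mul1r.
  have h1 : \sum_j t 0 j <= \sum_j `|t 0 j| by apply: ler_sum => j _; apply: ler_norm.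
  have h2 : ((n.+1)%:R : R) <= (2 * k)%:R by rewrite ler_nat.
  move: h2; rewrite -addn1 natrD => h2.
  rewrite -[X in X + _]mulr_natr mul1r; lra.
pose w (i : 'I_n.+1) := if unlift ord0 i is Some j then u j else 1 - \sum_j u j.
pose f (i : 'I_n.+1) := if unlift ord0 i is Some j then v + 2%:R *: row j D else v.
have uS (j : 'I_n) : unlift (ord0 : 'I_n.+1) (lift ord0 j) = Some j := liftK ord0 j.
have cx := @conv_family R n _ V f w.
have : conv V (\sum_i w i *: f i).
  apply: cx.
  - by move=> i; rewrite /w; case: (unlift ord0 i) => [j|] //; rewrite subr_ge0.
  - have Hs : \sum_(i < n) w (lift ord0 i) = \sum_i u i.
      by apply: eq_bigr => i _; rewrite /w uS.
    by rewrite big_ord_recl Hs /w unlift_none subrK.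
  - by move=> i; rewrite /f; case: (unlift ord0 i).
have Hs : \sum_(i < n) w (lift ord0 i) *: f (lift ord0 i) = \sum_i u i *: (v + 2%:R *: row i D).
  by apply: eq_bigr => i _; rewrite /w /f uS.
rewrite big_ord_recl Hs /w /f unlift_none.
move=> cx2; exists (k%:R^-1 *: y); split; last by rewrite scalerA divff // scale1r.
suff -> : k%:R^-1 *: y = (1 - \sum_j u j) *: v + \sum_j u j *: (v + 2%:R *: row j D) by [].
have ey : y = k%:R *: v + \sum_j (1 + t 0 j) *: row j D.
  rewrite -[y](subrK z) -/dl dlt mulmx_sum_row /z addrCA; congr (_ + _).
  by rewrite -big_split /=; apply: eq_bigr => j _; rewrite scalerDl scale1r addrC.
rewrite ey scalerDr scalerA mulVf // scale1r scaler_sumr.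
rewrite [in RHS](eq_bigr (fun j => u j *: v + u j *: (2%:R *: row j D))); last by move=> j _; rewrite scalerDr.
rewrite big_split /= -scaler_suml addrA -scalerDl subrK scale1r; congr (_ + _).
apply: eq_bigr => j _; rewrite !scalerA; congr (_ *: _).
rewrite /u natrM; field; by rewrite k0R.
Qed.
End Interior.
Section Final.
Variables (R : realType) (n : nat).
Implicit Types (x y z v w : 'rV[R]_n) (L V : seq 'rV[R]_n).

Lemma vec_id v w (s : R) : (1 - s) *: v + s *: w = v + s *: (w - v).
Proof. by rewrite scalerBl scale1r scalerBr addrAC addrA. Qed.

Lemma integralB x y : integral x -> integral y -> integral (x - y).
Proof. by move=> ix iy j; rewrite !mxE; apply: rpredB. Qed.

Lemma vertex_facts V v : is_vertex (conv V) v ->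
  v \in V /\ exists a, forall u, u \in V -> u != v -> dotp a u < dotp a v.
Proof.
move=> [a [b [le iff]]].
have [cv av] := (iff v).1 erefl.
have strict u : u \in V -> u != v -> dotp a u < dotp a v.
  move=> uV unv; rewrite lt_neqAle av le ?andbT; last exact: conv_in.
  apply/negP => /eqP eq; move/negP: unv; apply; apply/eqP; apply/iff; split => //.
  exact: conv_in.
split; last by exists a.
apply: contraT => vnV.
have [l [l0 l1 _ ea]] := dotp_conv a cv.
have z i : l i * (dotp a v - dotp a V`_i) = 0.
  apply: (@psumr_eq0P _ _ predT (fun j => l j * (dotp a v - dotp a V`_j))) => //.
    by move=> j _; rewrite mulr_ge0 // subr_ge0 ltW // strict ?mem_nth //; apply: contraNneq vnV => <-; apply: mem_nth.
  have -> : \sum_(j | predT j) l j * (dotp a v - dotp a V`_j) = dotp a v * \sum_j l j - \sum_j l j * dotp a V`_j.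
    by rewrite mulr_sumr -sumrB; apply: eq_bigr => j _; rewrite mulrBr mulrC.
  by rewrite l1 mulr1 -ea subrr.
have : \sum_i l i = 0.
  apply: big1 => i _; have := z i; move/eqP; rewrite mulf_eq0 => /orP [/eqP //|].
  rewrite subr_eq0 eq_sym => /eqP eq; exfalso.
  have neq : V`_i != v by apply: contraNneq vnV => <-; apply: mem_nth.
  by have := strict V`_i (mem_nth _ (ltn_ord i)) neq; rewrite eq ltxx.
by rewrite l1 => /eqP; rewrite oner_eq0.
Qed.

Lemma edge_d L v w z : conv L v -> conv L w -> integral v -> integral w -> integral z ->
  segment v w z -> z != v -> z != w ->
  exists tau : R, [/\ 0 < tau, integral (tau *: (w - v)) & conv L (v + 2%:R *: (tau *: (w - v)))].
Proof.
move=> cv cw iv iw iz [t [/andP [t0 t1] ez]] zv zw.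
have t0' : t != 0 by apply: contraNneq zv => t00; rewrite ez t00 subr0 scale1r scale0r addr0.
have t1' : t != 1 by apply: contraNneq zw => t11; rewrite ez t11 subrr scale0r scale1r add0r.
have [th|th] := leP t (2^-1).
  exists t; split.
  - by rewrite lt_def t0' t0.
  - have -> : t *: (w - v) = z - v by rewrite ez vec_id (addrC v) addrK.
    exact: integralB.
  - rewrite scalerA -vec_id; apply: conv2 => //.
    apply/andP; split; first by rewrite mulr_ge0.
    by rewrite -ler_pdivlMl ?ltr0n // mulr1.
exists (1 - t); split.
- by rewrite subr_gt0 lt_neqAle t1' t1.
- have -> : (1 - t) *: (w - v) = w - z.
    by rewrite ez vec_id opprD addrA scalerBl scale1r.
  exact: integralB.
- rewrite scalerA -vec_id; apply: conv2 => //.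
  apply/andP; split; first by rewrite mulr_ge0 // subr_ge0.
  rewrite -ler_pdivlMl ?ltr0n // mulr1; lra.
Qed.
End Final.
Unset Implicit Arguments.
Set Strict Implicit.

Theorem lemma3p3 (R : realType) (n : nat) (V : seq 'rV[R]_n) :
  (forall x, x \in V -> integral x) ->
  full_dim (conv V) ->
  (exists c, is_codegree (conv V) c /\ (n.+2 %/ 2 < c)%N) ->
  forall v, is_vertex (conv V) v ->
  exists w, is_edge (conv V) v w /\
    (forall z, integral z -> segment v w z -> z = v \/ z = w).
Proof.
move=> Vint fd [c [[c0 ck cmin] kc]] v vert.
have [vV [a av]] := vertex_facts vert.
apply: NNPP => Hno.
have H w : is_edge (conv V) v w -> exists z, [/\ integral z, segment v w z, z != v & z != w].
  move=> ew; apply: NNPP => nz; apply: Hno; exists w; split => // z iz sz.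
  have [->|zv] := eqVneq z v; first by left.
  have [->|zw] := eqVneq z w; first by right.
  by exfalso; apply: nz; exists z.
have [E [EQ QE Eext]] := min_gen (Q V v a).
have Esep e : e \in E -> exists c', forall q, q \in Q V v a -> q != e -> dotp c' q < dotp c' e.
  move=> eE; have [c' Hc'] := sep (Eext e eE).
  have Hs j : E`_j \in E -> E`_j != e -> dotp c' E`_j < dotp c' e.
    by move=> jE ne; apply: Hc'; rewrite mem_filter /= ne.
  exists c' => q qQ qe.
  have [l [l0 l1 eq ec]] := dotp_conv c' (QE q qQ).
  rewrite ltNge; apply/negP => le.
  have nn j : 0 <= l j * (dotp c' e - dotp c' E`_j).
    rewrite mulr_ge0 // subr_ge0.
    have [->//|ne] := eqVneq E`_j e.
    by apply: ltW; apply: Hs => //; apply: mem_nth.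
  have sm : \sum_(j | predT j) l j * (dotp c' e - dotp c' E`_j) = dotp c' e - dotp c' q.
    rewrite ec -[X in X - _]mulr1 -l1 mulr_sumr -sumrB.
    by apply: eq_bigr => j _; rewrite mulrBr mulrC.
  have z i : l i * (dotp c' e - dotp c' E`_i) = 0.
    apply: (@psumr_eq0P _ _ predT (fun j => l j * (dotp c' e - dotp c' E`_j))) => //.
    rewrite sm; apply/eqP; rewrite eq_le subr_le0 le /= -sm.
    by apply: sumr_ge0 => j _; exact: nn.
  move/eqP: qe; apply; rewrite eq.
  rewrite (eq_bigr (fun i => l i *: e)); first by rewrite -scaler_suml l1 scale1r.
  move=> i _; have [->//|lnz] := eqVneq (l i) 0; first by rewrite !scale0r.
  have [->//|ne] := eqVneq E`_i e.
  have := z i; move/eqP; rewrite mulf_eq0 (negPf lnz) /= subr_eq0 => /eqP eqd.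
  by have := Hs i (mem_nth _ (ltn_ord i)) ne; rewrite eqd ltxx.
have Ed : forall j : 'I_(size E), exists dt : 'rV[R]_n * R,
    [/\ 0 < dt.2, dt.1 = dt.2 *: (E`_j - v), integral dt.1 & conv V (v + 2%:R *: dt.1)].
  move=> j; have eE : E`_j \in E := mem_nth 0 (ltn_ord j).
  have [c' Hc'] := Esep _ eE.
  have [w [wV wv [s0 [s0p ew]] face]] := edge_of vV av (EQ _ eE) Hc'.
  have ed : is_edge (conv V) v w by split => //; rewrite eq_sym.
  have [z [iz sz zv zw]] := H w ed.
  have [tau [tp it ct]] := edge_d (conv_in vV) (conv_in wV) (Vint _ vV) (Vint _ wV) iz sz zv zw.
  exists (tau *: (w - v), tau * s0); split => //=.
  - exact: mulr_gt0.
  - by rewrite ew scalerA.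
have [dt Hdt] := fin_all_exists Ed.
pose G := \matrix_(j < size E) (dt j).1.
have EG e : e \in E -> (e - v <= G)%MS.
  move=> eE; have hi : (index e E < size E)%N by rewrite index_mem.
  pose j := Ordinal hi; have ej : E`_j = e := nth_index 0 eE.
  have [tp ed _ _] := Hdt j.
  have -> : e - v = (dt j).2^-1 *: row j G.
    by rewrite rowK ed scalerA mulVf ?gt_eqF // scale1r ej.
  by apply: scalemx_sub; apply: row_sub.
have span x : conv V x -> (x - v <= G)%MS.
  move=> cx; have [l [_ _ ->]] := conv_minus v cx.
  apply: summx_sub => i _; apply: scalemx_sub.
  have [->|ne] := eqVneq V`_i v; first by rewrite subrr sub0mx.
  have iU : V`_i \in U V v by rewrite memU ne andbT mem_nth.
  rewrite (ug av iU); apply: scalemx_sub.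
  have gQ : g v a V`_i \in Q V v a := map_f _ iU.
  have [m [_ _ ->]] := conv_minus v (QE _ gQ).
  apply: summx_sub => j _; apply: scalemx_sub; apply: EG; exact: mem_nth.
have rfG : row_full G.
  case: fd => x0 [X [cx0 cX rf]].
  have sub : (\matrix_(i < n) (row i X - x0) <= G)%MS.
    apply/row_subP => i0; rewrite rowK.
    have -> : row i0 X - x0 = (row i0 X - v) + (-1) *: (x0 - v).
      by rewrite scaleN1r opprB addrA subrK.
    by apply: addmx_sub; [exact: span (cX i0) | apply: scalemx_sub; exact: span cx0].
  rewrite /row_full eqn_leq rank_leq_col /=.
  by apply: (leq_trans _ (mxrankS sub)); rewrite (eqP rf).
pose f := fullrankfun rfG.
pose D := rowsub f G.
have uD : D \in unitmx := fullrowsub_unit rfG.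
have rD i : row i D = (dt (f i)).1 by rewrite row_rowsub rowK.
have k0 : (0 < n.+2 %/ 2)%N by lia.
have := cmin _ k0 kc; apply; apply: (int_pt (conv_in vV) (Vint _ vV) uD) => //.
- by move=> i; rewrite rD; case: (Hdt (f i)).
- by move=> i; rewrite rD; case: (Hdt (f i)).
- lia.
Qed.
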